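(* Let $(H,A,C)$ be a Doi-Hopf datum with $H$ a Hopf algebra. Let $V$ be the $k$-module of natural transformations $\nu:GF\to 1_{\mathcal C}$ and $V_1$ the $k$-module defined below. Then $\nu\mapsto \nu_{C\otimes A}$ is a $k$-module isomorphism $V\to V_1$, whose inverse sends $\nu\in V_1$ to the natural transformation given by $\nu_M(c\otimes m)=\sum m_{<0>}\big((\varepsilon_C\otimes I_A)\nu(c\otimes m_{<-1>}\otimes 1_A)\big)$. Under this isomorphism, normalized elements of $V_1$ correspond exactly to natural transformations $\nu$ with $\nu_M\circ\rho_M=I_M$ for all $M\in\mathcal C$. Consequently the forgetful functor $F:{}^C\mathcal M(H)_A\to\mathcal M_A$ is separable if and only if $V_1$ contains a normalized element.
   Context: $k$ commutative ring; Sweedler notation $\Delta(c)=\sum c_{(1)}\otimes c_{(2)}$, $\rho(m)=\sum m_{<-1>}\otimes m_{<0>}$ (iterated $m_{<-2>}\otimes m_{<-1>}\otimes m_{<0>}$). A Doi-Hopf datum $(H,A,C)$: $H$ a bialgebra, $A$ a left $H$-comodule algebra, $C$ a right $H$-module coalgebra ($\Delta(c\cdot h)=\sum c_{(1)}\cdot h_{(1)}\otimes c_{(2)}\cdot h_{(2)}$, $\varepsilon(c\cdot h)=\varepsilon(c)\varepsilon(h)$), $C$ flat over $k$. $\mathcal C={}^C\mathcal M(H)_A$: right $A$-modules with left $C$-coaction satisfying $\rho_M(ma)=\sum m_{<-1>}\cdot a_{<-1>}\otimes m_{<0>}a_{<0>}$, with $A$-linear $C$-colinear maps. $F$ forgets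 the coaction; its right adjoint $G(N)=C\otimes N$ has $(c\otimes n)a=\sum c\cdot a_{<-1>}\otimes na_{<0>}$, $\rho(c\otimes n)=\sum c_{(1)}\otimes c_{(2)}\otimes n$; the unit is $\rho_M$. So $C\otimes A$ and $C\otimes C\otimes A$ are Doi-Hopf modules (the latter with $(c\otimes d\otimes b)a=\sum c\cdot a_{<-2>}\otimes d\cdot a_{<-1>}\otimes ba_{<0>}$, coaction on the first factor). $V_1$ is the $k$-module of morphisms $\nu:C\otimes C\otimes A\to C\otimes A$ in $\mathcal C$ such that for all $a,b\in A$, $c,d\in C$: (i) $\nu(c\otimes d\otimes ba)=b\cdot\nu(c\otimes d\otimes a)$ where $b\cdot(c'\otimes a')=c'\otimes ba'$; (ii) with $\theta_{d'}=(\varepsilon_C\otimes I_A)\nu(c\otimes d'\otimes 1_A)$, $\sum d_{(2)}\cdot(\theta_{d_{(1)}})_{<-1>}\otimes(\theta_{d_{(1)}})_{<0>}=\nu(c\otimes d\otimes 1_A)$. $\nu\in V_1$ is normalized if $\sum\nu(c_{(1)}\otimes c_{(2)}\otimes a)=c\otimes a$ for all $c,a$. A functor $F:\mathcal C\to\mathcal D$ is separable if the natural map $\mathrm{Hom}_{\mathcal C}(M,N)\to\mathrm{Hom}_{\mathcal D}(FM,FN)$ has a left inverse natural in $M,N$. *)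

(* Defs.v *)
(* Tensor products of k-modules are not in MathComp: they are given
   abstractly by their universal property (see [tensor] below) and the
   theorem is stated for an arbitrary choice of tensor products. *)
From HB Require Import structures.
From mathcomp Require Import all_boot all_algebra.
Set Implicit Arguments. Unset Strict Implicit. Unset Printing Implicit Defensive.
Import GRing.Theory.
Local Open Scope ring_scope.

Section Tensor.
Variable k : comPzRingType.

Definition lin (U V : lmodType k) (f : U -> V) :=
  (forall x y, f (x + y) = f x + f y) /\ (forall (a : k) x, f (a *: x) = a *: f x).
Definition lin_scal (U : lmodType k) (f : U -> k) :=
  (forall x y, f (x + y) = f x + f y) /\ (forall (a : k) x, f (a *: x) = a * f x).
Definition bilin (U V W : lmodType k) (f : U -> V -> W) :=
  (forall v, lin (fun u => f u v)) /\ (forall u, lin (f u)).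

(* A tensor product of U and V: a k-module with a bilinear map satisfying
   the universal property.  [tlift f] is the induced linear map when f is
   bilinear (its value on non-bilinear f is irrelevant). *)
Record tensor (U V : lmodType k) := Tensor {
  tens_car : lmodType k;
  tmul : U -> V -> tens_car;
  tlift : forall W : lmodType k, (U -> V -> W) -> tens_car -> W;
  tmul_bilin : bilin tmul;
  tlift_lin : forall W f, bilin f -> lin (@tlift W f);
  tlift_tmul : forall W f, bilin f -> forall u v, @tlift W f (tmul u v) = f u v;
  tens_uniq : forall (W : lmodType k) (g h : tens_car -> W), lin g -> lin h ->
     (forall u v, g (tmul u v) = h (tmul u v)) -> forall x, g x = h x }.

Definition tensor_provider := forall U V : lmodType k, tensor U V.

Variable T : tensor_provider.

Definition tens (U V : lmodType k) : lmodType k := tens_car (T U V).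
Definition tm {U V : lmodType k} (u : U) (v : V) : tens U V := tmul (T U V) u v.
Definition tl {U V W : lmodType k} (f : U -> V -> W) : tens U V -> W :=
  @tlift _ _ (T U V) W f.

Definition tmap {U V U' V' : lmodType k} (f : U -> U') (g : V -> V')
  : tens U V -> tens U' V' := tl (fun u v => tm (f u) (g v)).
Definition tassoc {U V W : lmodType k} : tens (tens U V) W -> tens U (tens V W) :=
  tl (fun x w => tl (fun u v => tm u (tm v w)) x).
Definition epsI {X Y : lmodType k} (eps : X -> k) : tens X Y -> Y :=
  tl (fun x y => eps x *: y).
Definition Ieps {X Y : lmodType k} (eps : Y -> k) : tens X Y -> X :=
  tl (fun x y => eps y *: x).
Definition tensmul {X Y : lmodType k} (mX : X -> X -> X) (mY : Y -> Y -> Y)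
  (x y : tens X Y) : tens X Y :=
  tl (fun a b => tl (fun c d => tm (mX a c) (mY b d)) y) x.

Definition is_algebra (X : lmodType k) (m : X -> X -> X) (one : X) :=
  [/\ bilin m, (forall x y z, m (m x y) z = m x (m y z)),
      (forall x, m one x = x) & (forall x, m x one = x)].

Definition is_coalgebra (X : lmodType k) (D : X -> tens X X) (eps : X -> k) :=
  [/\ lin D, lin_scal eps,
      (forall x, tassoc (tmap D id (D x)) = tmap id D (D x)),
      (forall x, epsI eps (D x) = x) & (forall x, Ieps eps (D x) = x)].

Definition is_bialgebra (H : lmodType k) (m : H -> H -> H) (one : H)
  (D : H -> tens H H) (eps : H -> k) :=
  [/\ is_algebra m one, is_coalgebra D eps,
      (forall h g, D (m h g) = tensmul m m (D h) (D g)),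
      D one = tm one one &
      (forall h g, eps (m h g) = eps h * eps g) /\ eps one = 1].

Definition is_antipode (H : lmodType k) (m : H -> H -> H) (one : H)
  (D : H -> tens H H) (eps : H -> k) (S : H -> H) :=
  [/\ lin S,
      (forall h, tl (fun a b => m (S a) b) (D h) = eps h *: one) &
      (forall h, tl (fun a b => m a (S b)) (D h) = eps h *: one)].

Definition is_hopf (H : lmodType k) (m : H -> H -> H) (one : H)
  (D : H -> tens H H) (eps : H -> k) :=
  is_bialgebra m one D eps /\ exists S : H -> H, is_antipode m one D eps S.

Definition is_comod_alg (H A : lmodType k) (mH : H -> H -> H) (oneH : H)
  (DH : H -> tens H H) (epsH : H -> k)
  (mA : A -> A -> A) (oneA : A) (rhoA : A -> tens H A) :=
  [/\ is_algebra mA oneA, lin rhoA,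
      (forall a, tassoc (tmap DH id (rhoA a)) = tmap id rhoA (rhoA a)),
      (forall a, epsI epsH (rhoA a) = a) &
      (forall a b, rhoA (mA a b) = tensmul mH mA (rhoA a) (rhoA b))
      /\ rhoA oneA = tm oneH oneA].

Definition is_mod_coalg (H C : lmodType k) (mH : H -> H -> H) (oneH : H)
  (DH : H -> tens H H) (epsH : H -> k)
  (actC : C -> H -> C) (DC : C -> tens C C) (epsC : C -> k) :=
  [/\ is_coalgebra DC epsC, bilin actC,
      (forall c h g, actC (actC c h) g = actC c (mH h g)) /\
      (forall c, actC c oneH = c),
      (forall c h, DC (actC c h) =
          tl (fun c1 c2 => tl (fun h1 h2 => tm (actC c1 h1) (actC c2 h2)) (DH h))
             (DC c)) &
      (forall c h, epsC (actC c h) = epsC c * epsH h)].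

Definition flat (C : lmodType k) :=
  forall (U V : lmodType k) (f : U -> V), lin f -> injective f ->
    injective (tmap (@id C) f).

Section DoiHopf.
Variables (H A C : lmodType k).
Variables (mH : H -> H -> H) (oneH : H) (DH : H -> tens H H) (epsH : H -> k).
Variables (mA : A -> A -> A) (oneA : A) (rhoA : A -> tens H A).
Variables (actC : C -> H -> C) (DC : C -> tens C C) (epsC : C -> k).

Definition DH_datum :=
  [/\ is_bialgebra mH oneH DH epsH,
      is_comod_alg mH oneH DH epsH mA oneA rhoA,
      is_mod_coalg mH oneH DH epsH actC DC epsC & flat C].

Definition is_rmod (M : lmodType k) (act : M -> A -> M) :=
  [/\ bilin act, (forall m a b, act (act m a) b = act m (mA a b)) &
      (forall m, act m oneA = m)].

Definition is_DHmod (M : lmodType k) (act : M -> A -> M) (rho : M -> tens C M) :=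
  [/\ is_rmod act, lin rho,
      (forall m, tassoc (tmap DC id (rho m)) = tmap id rho (rho m)),
      (forall m, epsI epsC (rho m) = m) &
      (forall m a, rho (act m a) =
         tl (fun c m0 => tl (fun h a0 => tm (actC c h) (act m0 a0)) (rhoA a)) (rho m))].

Definition is_Amorph (M N : lmodType k) (actM : M -> A -> M) (actN : N -> A -> N)
  (f : M -> N) := lin f /\ forall m a, f (actM m a) = actN (f m) a.

Definition is_morph (M N : lmodType k) (actM : M -> A -> M) (rhoM : M -> tens C M)
  (actN : N -> A -> N) (rhoN : N -> tens C N) (f : M -> N) :=
  is_Amorph actM actN f /\ forall m, rhoN (f m) = tmap id f (rhoM m).

(* the right adjoint G(N) = C (x) N *)
Definition actG (N : lmodType k) (actN : N -> A -> N) (x : tens C N) (a : A)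
  : tens C N :=
  tl (fun c n => tl (fun h a0 => tm (actC c h) (actN n a0)) (rhoA a)) x.
Definition coactG (N : lmodType k) : tens C N -> tens C (tens C N) :=
  tl (fun c n => tl (fun c1 c2 => tm c1 (tm c2 n)) (DC c)).

(* families indexed by (raw) objects: nu_M : GF(M) -> M.
   Only their values at genuine Doi-Hopf modules matter. *)
Definition natfam :=
  forall (M : lmodType k), (M -> A -> M) -> (M -> tens C M) -> tens C M -> M.

Definition is_nat (nu : natfam) :=
  (forall (M : lmodType k) actM rhoM, is_DHmod actM rhoM ->
     is_morph (actG actM) (@coactG M) actM rhoM (nu M actM rhoM)) /\
  (forall (M : lmodType k) actM rhoM (N : lmodType k) actN rhoN (f : M -> N),
     is_DHmod actM rhoM -> is_DHmod actN rhoN -> is_morph actM rhoM actN rhoN f ->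
     forall x, f (nu M actM rhoM x) = nu N actN rhoN (tmap id f x)).

Definition actCA := actG mA.
Definition coactCA := @coactG A.
Definition actCCA := actG actCA.
Definition coactCCA := @coactG (tens C A).

Definition Phi (nu : natfam) : tens C (tens C A) -> tens C A :=
  nu (tens C A) actCA coactCA.

Definition inV1 (nu : tens C (tens C A) -> tens C A) :=
  [/\ is_morph actCCA coactCCA actCA coactCA nu,
      (forall c d a b, nu (tm c (tm d (mA b a))) = tmap id (mA b) (nu (tm c (tm d a)))) &
      (forall c d,
         let theta := fun d' => epsI epsC (nu (tm c (tm d' oneA))) in
         tl (fun d1 d2 => tl (fun h a0 => tm (actC d2 h) a0) (rhoA (theta d1))) (DC d)
         = nu (tm c (tm d oneA)))].

Definition normalized (nu : tens C (tens C A) -> tens C A) :=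
  forall c a, tl (fun c1 c2 => nu (tm c1 (tm c2 a))) (DC c) = tm c a.

Definition Psi (nu : tens C (tens C A) -> tens C A) : natfam :=
  fun M actM rhoM =>
    tl (fun c m => tl (fun d m0 => actM m0 (epsI epsC (nu (tm c (tm d oneA)))))
                      (rhoM m)).

Definition F_separable :=
  exists P : forall (M N : lmodType k) (actM : M -> A -> M) (rhoM : M -> tens C M)
                    (actN : N -> A -> N) (rhoN : N -> tens C N), (M -> N) -> M -> N,
  forall (M N : lmodType k) actM rhoM actN rhoN,
    is_DHmod actM rhoM -> is_DHmod actN rhoN ->
    [/\ (forall f, is_Amorph actM actN f ->
           is_morph actM rhoM actN rhoN (P M N actM rhoM actN rhoN f)),
        (forall f, is_morph actM rhoM actN rhoN f ->
           forall m, P M N actM rhoM actN rhoN f m = f m) &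
        (forall (M' : lmodType k) actM' rhoM' (N' : lmodType k) actN' rhoN' (g : M' -> M) (h : N -> N') f,
           is_DHmod actM' rhoM' -> is_DHmod actN' rhoN' ->
           is_morph actM' rhoM' actM rhoM g -> is_morph actN rhoN actN' rhoN' h ->
           is_Amorph actM actN f ->
           forall m, P M' N' actM' rhoM' actN' rhoN' (fun x => h (f (g x))) m
                     = h (P M N actM rhoM actN rhoN f (g m)))].

End DoiHopf.
End Tensor.

(* Main.v *)
Require Import Defs.
From mathcomp Require Import all_boot all_algebra.
From Stdlib Require Import FunctionalExtensionality.
Set Implicit Arguments. Unset Strict Implicit. Unset Printing Implicit Defensive.
Import GRing.Theory.
Local Open Scope ring_scope.

Section TensorLib.
Variable k : comPzRingType.
Variable T : tensor_provider k.

Lemma linD (U V : lmodType k) (f : U -> V) : lin f -> forall x y, f (x + y) = f x + f y.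
Proof. by case. Qed.
Lemma linZ (U V : lmodType k) (f : U -> V) : lin f -> forall a x, f (a *: x) = a *: f x.
Proof. by case. Qed.
Lemma lin0 (U V : lmodType k) (f : U -> V) : lin f -> f 0 = 0.
Proof. move=> [fD _]. apply: (addrI (f 0)). by rewrite addr0 -fD addr0. Qed.

Lemma lin_idf (U : lmodType k) : lin (fun x : U => x).
Proof. by []. Qed.
Lemma lin_comp (U V W : lmodType k) (g : V -> W) (h : U -> V) :
  lin g -> lin h -> lin (fun x => g (h x)).
Proof. move=> [gD gZ] [hD hZ]; split=> *; by rewrite ?hD ?gD ?hZ ?gZ. Qed.
Lemma lin_addf (U V : lmodType k) (f g : U -> V) :
  lin f -> lin g -> lin (fun x => f x + g x).
Proof.
move=> [fD fZ] [gD gZ]; split=> *; rewrite ?fD ?gD ?fZ ?gZ.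
  by rewrite addrACA.
by rewrite scalerDr.
Qed.
Lemma lin_scalef (U V : lmodType k) (a : k) (f : U -> V) :
  lin f -> lin (fun x => a *: f x).
Proof. move=> [fD fZ]; split=> *; rewrite ?fD ?fZ ?scalerDr //. by rewrite !scalerA mulrC. Qed.
Lemma lin_scalcomp (U V W : lmodType k) (s : V -> k) (h : U -> V) (w : W) :
  lin_scal s -> lin h -> lin (fun x => s (h x) *: w).
Proof. move=> [sD sZ] [hD hZ]; split=> *; by rewrite ?hD ?sD ?hZ ?sZ ?scalerDl ?scalerA. Qed.
Lemma lin_app1 (U V W X : lmodType k) (f : U -> V -> W) (h : X -> U) (v : V) :
  bilin f -> lin h -> lin (fun x => f (h x) v).
Proof. move=> [f1 f2] hl; exact: (lin_comp (f1 v) hl). Qed.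
Lemma lin_app2 (U V W X : lmodType k) (f : U -> V -> W) (u : U) (h : X -> V) :
  bilin f -> lin h -> lin (fun x => f u (h x)).
Proof. move=> [f1 f2] hl; exact: (lin_comp (f2 u) hl). Qed.
Lemma bilin_2 (U V W : lmodType k) (f : U -> V -> W) u : bilin f -> lin (f u).
Proof. by case=> _ H; apply: H. Qed.

Lemma tm_bilin (U V : lmodType k) : bilin (@tm k T U V).
Proof. exact: tmul_bilin. Qed.
Lemma tlE (U V W : lmodType k) (f : U -> V -> W) u v : bilin f -> tl f (tm T u v) = f u v.
Proof. move=> fb; exact: (tlift_tmul (T U V) fb). Qed.
Lemma tl_lin (U V W : lmodType k) (f : U -> V -> W) : bilin f -> lin (tl (T:=T) f).
Proof. move=> fb; exact: (tlift_lin (T U V) fb). Qed.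
Lemma text (U V W : lmodType k) (g h : tens T U V -> W) :
  lin g -> lin h -> (forall u v, g (tm T u v) = h (tm T u v)) -> forall x, g x = h x.
Proof. exact: tens_uniq. Qed.
Lemma tl_congr (U V W : lmodType k) (f g : U -> V -> W) x :
  (forall u v, f u v = g u v) -> tl (T:=T) f x = tl g x.
Proof.
move=> e; have -> : f = g by apply: functional_extensionality=> u; apply: functional_extensionality.
by [].
Qed.

Lemma lin_tl_fun (X U V W : lmodType k) (F : X -> U -> V -> W) z :
  (forall x, bilin (F x)) -> (forall u v, lin (fun x => F x u v)) ->
  lin (fun x => tl (T:=T) (F x) z).
Proof.
move=> Fb Fl; split.
  move=> x y; apply: (text (g := fun z => tl (F (x + y)) z)
                           (h := fun z => tl (F x) z + tl (F y) z)).
  - exact: tl_lin.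
  - apply: lin_addf; exact: tl_lin.
  move=> u v; rewrite !tlE //. exact: (linD (Fl u v)).
move=> a x; apply: (text (g := fun z => tl (F (a *: x)) z)
                         (h := fun z => a *: tl (F x) z)).
- exact: tl_lin.
- apply: lin_scalef; exact: tl_lin.
move=> u v; rewrite !tlE //. exact: (linZ (Fl u v)).
Qed.


End TensorLib.

Ltac unf := unfold actCCA, coactCCA, actCA, coactCA, tmap, epsI, Ieps, tassoc, tensmul, actG, coactG.

Ltac lin_t :=
  cbv beta;
  match goal with
  | |- bilin _ => split; [intro; lin_t | intro; lin_t]
  | |- lin_scal _ => assumption
  | |- lin (fun x => x) => exact: lin_idf
  | |- lin (fun x => @?f x + @?g x) => apply: lin_addf; [lin_t | lin_t]
  | |- lin (fun x => ?a *: @?f x) => apply: lin_scalef; lin_t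
  | |- lin (fun x => ?s (@?h x) *: ?w) => apply: lin_scalcomp; [assumption | lin_t]
  | |- lin (fun x => ?g (@?h x)) => apply: (lin_comp (g := g)); [lin_atom | lin_t]
  | |- lin (fun x => tl (@?F x) ?z) => apply: lin_tl_fun; [intro; lin_t | intros; lin_t]
  | |- lin (fun x => ?g (@?h x) ?w) => apply: (lin_app1 (f := g)); [bilin_atom | lin_t]
  | |- lin _ => lin_atom
  end
with lin_atom :=
  cbv beta;
  first [ assumption
        | exact: lin_idf
        | apply: tl_lin; lin_t
        | lazymatch goal with
          | |- lin (fun x => _) => lin_t
          | |- lin (?f ?u) => apply: (bilin_2 (f := f)); bilin_atom
          end ]
with bilin_atom :=
  first [ assumption | exact: tm_bilin | lazymatch goal with |- bilin (fun _ _ => _) => lin_t end ].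


Ltac lt := intros; try unf; lin_t.
Ltac tle := repeat (rewrite tlE; [|lt]).

Section TensorLib2.
Variable k : comPzRingType.
Variable T : tensor_provider k.

Lemma tl_comp (U V W W' : lmodType k) (L : W -> W') (f : U -> V -> W) x :
  lin L -> bilin f -> L (tl (T:=T) f x) = tl (fun u v => L (f u v)) x.
Proof.
move=> Ll fb.
have fb' : bilin (fun u v => L (f u v)).
  case: fb => f1 f2; split=> [v|u]; apply: lin_comp => //; by [apply: f1 | apply: f2].
apply: (text (g := fun x => L (tl f x)) (h := tl (fun u v => L (f u v)))).
- apply: lin_comp => //; exact: tl_lin.
- exact: tl_lin.
by move=> u v; rewrite !tlE.
Qed.

Lemma tl_swap (U V U' V' W : lmodType k) (F : U -> V -> U' -> V' -> W) x y :
  (forall u v, bilin (F u v)) -> (forall u' v', bilin (fun u v => F u v u' v')) ->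
  tl (T:=T) (fun u v => tl (T:=T) (fun u' v' => F u v u' v') y) x
  = tl (fun u' v' => tl (fun u v => F u v u' v') x) y.
Proof.
move=> F1 F2.
have L1 : forall (u' : U') (v' : V') (v : V), lin (fun u => F u v u' v').
  by move=> u' v' v; case: (F2 u' v') => H _; apply: H.
have L2 : forall (u' : U') (v' : V') (u : U), lin (fun v => F u v u' v').
  by move=> u' v' u; case: (F2 u' v') => _ H; apply: H.
have L3 : forall (u : U) (v : V) (v' : V'), lin (fun u' => F u v u' v').
  by move=> u v v'; case: (F1 u v) => H _; apply: H.
have L4 : forall (u : U) (v : V) (u' : U'), lin (fun v' => F u v u' v').
  by move=> u v u'; case: (F1 u v) => _ H; apply: H.
have B1 : bilin (fun u v => tl (T:=T) (fun u' v' => F u v u' v') y).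
  split=> [v|u].
    by apply: lin_tl_fun => [u|u' v']; [exact: F1 | exact: L1].
  by apply: lin_tl_fun => [v|u' v']; [exact: F1 | exact: L2].
have B2 : forall x, bilin (fun u' v' => tl (T:=T) (fun u v => F u v u' v') x).
  move=> x0; split=> [v'|u'].
    by apply: lin_tl_fun => [u'|u v]; [exact: F2 | exact: L3].
  by apply: lin_tl_fun => [v'|u v]; [exact: F2 | exact: L4].
apply: (text (g := tl (fun u v => tl (T:=T) (fun u' v' => F u v u' v') y))
             (h := fun x => tl (fun u' v' => tl (fun u v => F u v u' v') x) y)).
- exact: tl_lin.
- by apply: lin_tl_fun => [x0|u' v']; [exact: B2 | apply: tl_lin].
move=> u v; rewrite tlE //; apply: tl_congr => u' v'; by rewrite tlE.
Qed.

Lemma coass_gen (X M W : lmodType k) (D : X -> tens T X X) (rho : M -> tens T X M) m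
  (F : X -> X -> M -> W) :
  lin D -> lin rho ->
  tassoc (tmap D id (rho m)) = tmap id rho (rho m) ->
  (forall c2 m0, lin (fun c1 => F c1 c2 m0)) -> (forall c1 m0, lin (fun c2 => F c1 c2 m0)) ->
  (forall c1 c2, lin (F c1 c2)) ->
  tl (fun c m0 => tl (fun c1 c2 => F c1 c2 m0) (D c)) (rho m)
  = tl (fun c1 y => tl (fun c2 m0 => F c1 c2 m0) (rho y)) (rho m).
Proof.
move=> Dl rl co F1 F2 F3.
have Fb : forall c1, bilin (fun c2 m0 => F c1 c2 m0).
  by move=> c1; split=> [m0|c2]; [exact: F2 | exact: F3].
have Lb : bilin (fun c1 (t : tens T X M) => tl (T:=T) (fun c2 m0 => F c1 c2 m0) t).
  split=> [t|c1]; last by apply: tl_lin.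
  by apply: lin_tl_fun => [c1|c2 m0]; [exact: Fb | exact: F1].
pose L := tl (T:=T) (fun c1 (t : tens T X M) => tl (fun c2 m0 => F c1 c2 m0) t).
have Ll : lin L by apply: tl_lin.
have E1 : tl (fun c m0 => tl (fun c1 c2 => F c1 c2 m0) (D c)) (rho m)
          = L (tassoc (tmap D id (rho m))).
  rewrite /tassoc /tmap (tl_comp (L := tl (fun x w => tl (fun u v => tm T u (tm T v w)) x)));
    [|lin_t|lin_t].
  rewrite (tl_comp (L := L)) //; last lin_t.
  apply: tl_congr => c m0; rewrite tlE; last lin_t.
  rewrite (tl_comp (L := L)) //; last lin_t.
  by apply: tl_congr => c1 c2; rewrite /L !tlE.
rewrite E1 co /tmap (tl_comp (L := L)) //; last lin_t.
by apply: tl_congr => c y; rewrite /L tlE.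
Qed.

Lemma counit_gen (X M W : lmodType k) (eps : X -> k) (rho : M -> tens T X M) m (G : M -> W) :
  lin_scal eps -> lin G -> epsI eps (rho m) = m ->
  tl (T:=T) (fun c m0 => eps c *: G m0) (rho m) = G m.
Proof.
move=> el Gl e; rewrite -{2}e /epsI (tl_comp (L := G)) //; last lin_t.
by apply: tl_congr => c m0; rewrite (linZ Gl).
Qed.

Lemma counitI_gen (X W : lmodType k) (eps : X -> k) (D : X -> tens T X X) c (G : X -> W) :
  lin_scal eps -> lin G -> Ieps eps (D c) = c ->
  tl (T:=T) (fun c1 c2 => eps c2 *: G c1) (D c) = G c.
Proof.
move=> el Gl e; rewrite -{2}e /Ieps (tl_comp (L := G)) //; last lin_t.
by apply: tl_congr => c1 c2; rewrite (linZ Gl).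
Qed.

End TensorLib2.


Section DH.
Variable k : comPzRingType.
Variable T : tensor_provider k.
Variables (H A C : lmodType k).
Variables (mH : H -> H -> H) (oneH : H) (DH : H -> tens T H H) (epsH : H -> k).
Variables (mA : A -> A -> A) (oneA : A) (rhoA : A -> tens T H A).
Variables (actC : C -> H -> C) (DC : C -> tens T C C) (epsC : C -> k).
Hypothesis mHb : bilin mH.
Hypothesis DHl : lin DH.
Hypothesis epsHl : lin_scal epsH.
Hypothesis mAb : bilin mA.
Hypothesis mA_assoc : forall x y z, mA (mA x y) z = mA x (mA y z).
Hypothesis mA_1l : forall x, mA oneA x = x.
Hypothesis mA_1r : forall x, mA x oneA = x.
Hypothesis rhoAl : lin rhoA.
Hypothesis rhoA_co : forall a, tassoc (tmap DH id (rhoA a)) = tmap id rhoA (rhoA a).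
Hypothesis rhoA_eps : forall a, epsI epsH (rhoA a) = a.
Hypothesis rhoA_mul : forall a b, rhoA (mA a b) = tensmul mH mA (rhoA a) (rhoA b).
Hypothesis rhoA_one : rhoA oneA = tm T oneH oneA.
Hypothesis DCl : lin DC.
Hypothesis epsCl : lin_scal epsC.
Hypothesis DC_co : forall x, tassoc (tmap DC id (DC x)) = tmap id DC (DC x).
Hypothesis DC_epsI : forall x, epsI epsC (DC x) = x.
Hypothesis DC_Ieps : forall x, Ieps epsC (DC x) = x.
Hypothesis actCb : bilin actC.
Hypothesis actC_assoc : forall c h g, actC (actC c h) g = actC c (mH h g).
Hypothesis actC_1 : forall c, actC c oneH = c.
Hypothesis DC_act : forall c h, DC (actC c h) =
  tl (fun c1 c2 => tl (fun h1 h2 => tm T (actC c1 h1) (actC c2 h2)) (DH h)) (DC c).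
Hypothesis epsC_act : forall c h, epsC (actC c h) = epsC c * epsH h.

Lemma rhoA_co' (W : lmodType k) (F : H -> H -> A -> W) a :
  (forall c2 m0, lin (fun c1 => F c1 c2 m0)) -> (forall c1 m0, lin (fun c2 => F c1 c2 m0)) ->
  (forall c1 c2, lin (F c1 c2)) ->
  tl (fun h a0 => tl (fun h1 h2 => F h1 h2 a0) (DH h)) (rhoA a)
  = tl (fun h1 y => tl (fun h2 a0 => F h1 h2 a0) (rhoA y)) (rhoA a).
Proof. move=> *; exact: coass_gen. Qed.

Lemma DC_co' (W : lmodType k) (F : C -> C -> C -> W) c :
  (forall c2 m0, lin (fun c1 => F c1 c2 m0)) -> (forall c1 m0, lin (fun c2 => F c1 c2 m0)) ->
  (forall c1 c2, lin (F c1 c2)) ->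
  tl (fun c0 m0 => tl (fun c1 c2 => F c1 c2 m0) (DC c0)) (DC c)
  = tl (fun c1 y => tl (fun c2 m0 => F c1 c2 m0) (DC y)) (DC c).
Proof. move=> *; exact: coass_gen. Qed.

Section GN.
Variables (N : lmodType k) (actN : N -> A -> N).
Hypothesis actNb : bilin actN.
Hypothesis actN_assoc : forall m a b, actN (actN m a) b = actN m (mA a b).
Hypothesis actN_1 : forall m, actN m oneA = m.

Lemma actG_tm c n a : actG rhoA actC actN (tm T c n) a
  = tl (fun h a0 => tm T (actC c h) (actN n a0)) (rhoA a).
Proof. rewrite /actG tlE //; lin_t. Qed.

Lemma actG_bilin : bilin (actG rhoA actC actN).
Proof. unf; lin_t. Qed.

Lemma actG_rmod : is_rmod mA oneA (actG rhoA actC actN).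
Proof.
split.
- exact: actG_bilin.
- move=> x a b.
  apply: (text (g := fun x => actG rhoA actC actN (actG rhoA actC actN x a) b)
               (h := fun x => actG rhoA actC actN x (mA a b))); [unf; lin_t | unf; lin_t |].
  move=> c n; rewrite !actG_tm rhoA_mul /tensmul.
  rewrite (tl_comp (L := fun y => actG rhoA actC actN y b)); [|unf; lin_t|lin_t].
  rewrite (tl_comp (L := tl (fun h a0 => tm T (actC c h) (actN n a0)))); [|lin_t|lin_t].
  apply: tl_congr => h1 a1; rewrite actG_tm.
  rewrite (tl_comp (L := tl (fun h a0 => tm T (actC c h) (actN n a0)))); [|lin_t|lin_t].
  by apply: tl_congr => h2 a2; rewrite tlE ?actC_assoc ?actN_assoc //; lin_t.
- move=> x; apply: (text (g := fun x => actG rhoA actC actN x oneA) (h := id));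
    [unf; lin_t | exact: lin_idf |].
  by move=> c n; rewrite actG_tm rhoA_one tlE ?actC_1 ?actN_1 //; lin_t.
Qed.

Lemma coactG_tm (c : C) (n : N) : coactG DC (tm T c n) = tl (fun c1 c2 => tm T c1 (tm T c2 n)) (DC c).
Proof. rewrite /coactG tlE //; lt. Qed.

Lemma coactG_lin : lin (coactG DC (N:=N)).
Proof. lt. Qed.

Lemma G_coass (x : tens T C N) : tassoc (tmap DC id (coactG DC x)) = tmap id (coactG DC (N:=N)) (coactG DC x).
Proof.
apply: (text (g := fun x => tassoc (tmap DC id (coactG DC x)))
             (h := fun x => tmap id (coactG DC (N:=N)) (coactG DC (N:=N) x))); [lt | lt |].
move=> c n; rewrite coactG_tm /tassoc /tmap.
rewrite (tl_comp (L := tl (fun c1 y => tm T (DC c1) (id y)))); [|lt|lt].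
rewrite (tl_comp (L := tl (fun x w => tl (fun u v => tm T u (tm T v w)) x))); [|lt|lt].
rewrite (tl_comp (L := tl (fun c1 y => tm T (id c1) (coactG DC y)))); [|lt|lt].
transitivity (tl (fun c0 m0 => tl (fun c1 c2 => tm T c1 (tm T c2 (tm T m0 n))) (DC c0)) (DC c)).
  by apply: tl_congr => c1 c2; tle.
rewrite DC_co'; [|lt|lt|lt].
apply: tl_congr => c1 y; rewrite tlE; [|lt].
by rewrite /id coactG_tm (tl_comp (L := tm T c1)); [|lt|lt].
Qed.

Lemma G_counit x : epsI epsC (coactG DC (N:=N) x) = x.
Proof.
apply: (text (g := fun x => epsI epsC (coactG DC (N:=N) x)) (h := id)); [lt | lt |].
move=> c n; rewrite coactG_tm /epsI (tl_comp (L := tl (fun x y => epsC x *: y))); [|lt|lt].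
rewrite -[RHS](counit_gen (eps := epsC) (rho := DC) (m := c) (G := fun c2 => tm T c2 n)) //; [|lt].
by apply: tl_congr => c1 c2; rewrite tlE //; lt.
Qed.

Lemma G_compat (x : tens T C N) a : coactG DC (actG rhoA actC actN x a) =
  tl (fun c m0 => tl (fun h a0 => tm T (actC c h) (actG rhoA actC actN m0 a0)) (rhoA a))
     (coactG DC x).
Proof.
apply: (text (g := fun x => coactG DC (actG rhoA actC actN x a))
  (h := fun x => tl (fun c m0 => tl (fun h a0 => tm T (actC c h) (actG rhoA actC actN m0 a0)) (rhoA a))
     (coactG DC x))); [lt | lt |].
move=> c n.
transitivity (tl (fun h a0 => tl (fun c1 c2 => tl (fun h1 h2 => tm T (actC c1 h1) (tm T (actC c2 h2) (actN n a0))) (DH h)) (DC c)) (rhoA a)).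
  rewrite actG_tm (tl_comp (L := coactG DC (N:=N))); [|lt|lt].
  apply: tl_congr => h a0; rewrite coactG_tm DC_act.
  rewrite (tl_comp (L := tl (fun c1 c2 => tm T c1 (tm T c2 (actN n a0))))); [|lt|lt].
  apply: tl_congr => c1 c2.
  rewrite (tl_comp (L := tl (fun c1 c2 => tm T c1 (tm T c2 (actN n a0))))); [|lt|lt].
  by apply: tl_congr => h1 h2; rewrite tlE //; lt.
transitivity (tl (fun c1 c2 => tl (fun h a0 => tl (fun h1 h2 => tm T (actC c1 h1) (tm T (actC c2 h2) (actN n a0))) (DH h)) (rhoA a)) (DC c)).
  by rewrite tl_swap; [| lt | lt].
rewrite coactG_tm (tl_comp (L := tl _)); [|lt|lt].
apply: tl_congr => c1 c2; rewrite tlE; [|lt].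
rewrite rhoA_co'; [|lt|lt|lt].
apply: tl_congr => h y; rewrite actG_tm (tl_comp (L := tm T (actC c1 h))); [|lt|lt].
done.
Qed.

Lemma G_DH : is_DHmod mA oneA rhoA actC DC epsC (actG rhoA actC actN) (coactG DC (N:=N)).
Proof.
split.
- exact: actG_rmod.
- exact: coactG_lin.
- exact: G_coass.
- exact: G_counit.
- exact: G_compat.
Qed.
End GN.

Lemma tmap_morph (N N' : lmodType k) (actN : N -> A -> N) (actN' : N' -> A -> N') (f : N -> N') :
  bilin actN -> bilin actN' -> is_Amorph actN actN' f ->
  is_morph (actG rhoA actC actN) (coactG DC (N:=N)) (actG rhoA actC actN') (coactG DC (N:=N'))
    (tmap id f).
Proof.
move=> actNb actN'b [fl fA]; split; [split|].
- lt.
- move=> x a.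
  apply: (text (g := fun x => tmap id f (actG rhoA actC actN x a))
               (h := fun x => actG rhoA actC actN' (tmap id f x) a)); [lt|lt|].
  move=> c n; rewrite actG_tm // /tmap; tle; rewrite actG_tm //.
  rewrite (tl_comp (L := tl _)); [|lt|lt].
  by apply: tl_congr => h a0; tle; rewrite fA.
- move=> x.
  apply: (text (g := fun x => coactG DC (tmap id f x))
               (h := fun x => tmap id (tmap id f) (coactG DC (N:=N) x))); [lt|lt|].
  move=> c n; rewrite /tmap; tle; rewrite !coactG_tm (tl_comp (L := tl _)); [|lt|lt].
  by apply: tl_congr => c1 c2; tle.
Qed.

Lemma coactG_tassoc (N : lmodType k) (x : tens T C N) :
  coactG DC x = tassoc (tmap DC id x).
Proof.
apply: (text (g := coactG DC (N:=N)) (h := fun x => tassoc (tmap DC id x))); [lt|lt|].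
by move=> c n; rewrite coactG_tm /tassoc /tmap; tle.
Qed.

Lemma epsI_actG (N : lmodType k) (actN : N -> A -> N) (y : tens T C N) a :
  bilin actN -> epsI epsC (actG rhoA actC actN y a) = actN (epsI epsC y) a.
Proof.
move=> actNb.
apply: (text (g := fun y => epsI epsC (actG rhoA actC actN y a))
             (h := fun y => actN (epsI epsC y) a)); [lt|lt|].
move=> c n; rewrite actG_tm // /epsI; tle.
rewrite (tl_comp (L := tl (fun x y => epsC x *: y))); [|lt|lt].
transitivity (epsC c *: actN n (tl (fun h a0 => epsH h *: a0) (rhoA a))).
  rewrite (tl_comp (L := fun z => epsC c *: actN n z)); [|lt|lt].
  apply: tl_congr => h a0; tle.
  by rewrite epsC_act -scalerA (linZ (bilin_2 _ actNb)).
by have := rhoA_eps a; rewrite /epsI => ->; rewrite (linZ (proj1 actNb a)).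
Qed.

Lemma epsI_tmap (X N N' : lmodType k) (eps : X -> k) (f : N -> N') (y : tens T X N) :
  lin_scal eps -> lin f -> epsI eps (tmap id f y) = f (epsI eps y).
Proof.
move=> el fl.
apply: (text (g := fun y => epsI eps (tmap id f y)) (h := fun y => f (epsI eps y))); [lt|lt|].
by move=> c n; rewrite /epsI /tmap; tle; rewrite /id (linZ fl).
Qed.

Lemma tm_expand (X Y Z : lmodType k) (c : X) (y : tens T Y Z) :
  tm T c y = tl (fun d m0 => tm T c (tm T d m0)) y.
Proof.
apply: (text (g := tm T c) (h := tl (fun d m0 => tm T c (tm T d m0)))); [lt|lt|].
by move=> u v; tle.
Qed.

Section GM.
Variables (M : lmodType k) (actM : M -> A -> M) (rhoM : M -> tens T C M).
Hypothesis HM : is_DHmod mA oneA rhoA actC DC epsC actM rhoM.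

Lemma rho_morph : is_morph actM rhoM (actG rhoA actC actM) (coactG DC (N:=M)) rhoM.
Proof.
case: HM => [[actMb actMa actM1] rhoMl rhoMco rhoMeps rhoMcomp].
split; [split|].
- exact: rhoMl.
- by move=> m a; rewrite rhoMcomp.
- by move=> m; rewrite coactG_tassoc rhoMco.
Qed.
End GM.

Lemma mA_rmod : is_rmod mA oneA mA.
Proof. by split. Qed.

Lemma CA_DH : is_DHmod mA oneA rhoA actC DC epsC (actCA mA rhoA actC) (coactCA DC).
Proof. exact: G_DH. Qed.

Lemma actCA_rmod : is_rmod mA oneA (actCA mA rhoA actC).
Proof. exact: actG_rmod. Qed.

Lemma CCA_DH : is_DHmod mA oneA rhoA actC DC epsC (actCCA mA rhoA actC) (coactCCA DC).
Proof. by case: actCA_rmod => b a1 a2; apply: G_DH. Qed.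

Lemma act_Amorph (N : lmodType k) (actN : N -> A -> N) (n : N) :
  is_rmod mA oneA actN -> is_Amorph mA actN (actN n).
Proof. by case=> b a1 a2; split; [exact: bilin_2 | move=> a0 b0; rewrite a1]. Qed.

Lemma mA_Amorph b : is_Amorph mA mA (mA b).
Proof. by split; [exact: bilin_2 | move=> a0 b0; rewrite mA_assoc]. Qed.

Section Nat.
Variable nu : natfam T A C.
Arguments nu : clear implicits.
Hypothesis Hnu : is_nat mA oneA rhoA actC DC epsC nu.

Lemma nu_morph (M : lmodType k) actM rhoM : is_DHmod mA oneA rhoA actC DC epsC actM rhoM ->
  is_morph (actG rhoA actC actM) (coactG DC (N:=M)) actM rhoM (nu M actM rhoM).
Proof. by case: Hnu => H1 _; apply: H1. Qed.

Lemma nu_lin (M : lmodType k) actM rhoM : is_DHmod mA oneA rhoA actC DC epsC actM rhoM ->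
  lin (nu M actM rhoM).
Proof. by move/nu_morph=> [[]]. Qed.

Lemma Phi_lin : lin (Phi mA rhoA actC DC nu).
Proof. exact: (nu_lin CA_DH). Qed.

Lemma nu_GN (N : lmodType k) (actN : N -> A -> N) (n : N) c d :
  is_rmod mA oneA actN ->
  nu (tens T C N) (actG rhoA actC actN) (coactG DC (N:=N)) (tm T c (tm T d n))
  = tmap id (actN n) (Phi mA rhoA actC DC nu (tm T c (tm T d oneA))).
Proof.
move=> HN; have HN' := HN; case: HN' => actNb actNa actN1.
case: Hnu => _ H2.
have Hm := tmap_morph mAb actNb (act_Amorph n HN).
rewrite /Phi (H2 _ _ _ _ _ _ _ CA_DH (G_DH actNb actNa actN1) Hm).
by rewrite /tmap; tle; rewrite /id actN1.
Qed.

Lemma reconstruct (M : lmodType k) actM rhoM :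
  is_DHmod mA oneA rhoA actC DC epsC actM rhoM ->
  forall x, nu M actM rhoM x = Psi oneA epsC (Phi mA rhoA actC DC nu) actM rhoM x.
Proof.
move=> HM; have HM' := HM; case: HM' => [[actMb actMa actM1] rhoMl rhoMco rhoMeps rhoMcomp].
have nuMl := nu_lin HM.
have GMDH := G_DH actMb actMa actM1.
have nuGl := nu_lin GMDH.
have Phil := Phi_lin.
apply: (text (g := nu M actM rhoM) (h := Psi oneA epsC (Phi mA rhoA actC DC nu) actM rhoM));
  [done | rewrite /Psi; lt |].
move=> c m.
case: Hnu => _ H2.
rewrite -[LHS]rhoMeps (H2 _ _ _ _ _ _ _ HM GMDH (rho_morph HM)).
rewrite /tmap tlE; [|lt]. rewrite /id tm_expand.
rewrite (tl_comp (L := fun z => epsI epsC (nu (tens T C M) (actG rhoA actC actM) (coactG DC (N:=M)) z)));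
  [|lt|lt].
rewrite /Psi tlE; [|lt].
apply: tl_congr => d m0.
rewrite nu_GN; last by split.
by rewrite epsI_tmap //; apply: bilin_2.
Qed.

Lemma Phi_inV1 : inV1 mA oneA rhoA actC DC epsC (Phi mA rhoA actC DC nu).
Proof.
have Phil := Phi_lin.
split.
- exact: (nu_morph CA_DH).
- move=> c d a b.
  case: Hnu => _ H2.
  have Hm := tmap_morph mAb mAb (mA_Amorph b).
  rewrite /Phi (H2 _ _ _ _ _ _ _ CA_DH CA_DH Hm).
  by rewrite /tmap; tle.
- move=> c d /=.
  rewrite [RHS](reconstruct CA_DH) /Psi tlE; [|lt].
  rewrite /coactCA coactG_tm (tl_comp (L := tl _)); [|lt|lt].
  apply: tl_congr => d1 d2; rewrite tlE; [|lt].
  rewrite /actCA actG_tm //.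
  by apply: tl_congr => h a0; rewrite mA_1l.
Qed.

Lemma Psi_Phi (M : lmodType k) actM rhoM :
  is_DHmod mA oneA rhoA actC DC epsC actM rhoM ->
  forall x, Psi oneA epsC (Phi mA rhoA actC DC nu) actM rhoM x = nu M actM rhoM x.
Proof. by move=> HM x; rewrite reconstruct. Qed.

Lemma normalized_iff :
  normalized DC (Phi mA rhoA actC DC nu) <->
  (forall (M : lmodType k) actM rhoM,
     is_DHmod mA oneA rhoA actC DC epsC actM rhoM ->
     forall m, nu M actM rhoM (rhoM m) = m).
Proof.
have Phil := Phi_lin.
split.
- move=> Hn M actM rhoM HM m.
  have HM' := HM; case: HM' => [[actMb actMa actM1] rhoMl rhoMco rhoMeps rhoMcomp].
  rewrite reconstruct // /Psi.
  rewrite -(coass_gen (D := DC) (rho := rhoM) (m := m)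
     (F := fun c d m0 => actM m0 (epsI epsC (Phi mA rhoA actC DC nu (tm T c (tm T d oneA))))));
    [|lt|lt|exact: rhoMco|lt|lt|lt].
  rewrite -[RHS]rhoMeps /epsI.
  apply: tl_congr => c m0.
  rewrite -(tl_comp (L := actM m0)); [|lt|lt].
  rewrite -(tl_comp (L := epsI epsC)); [|lt|lt].
  rewrite (Hn c oneA) /epsI tlE; [|lt].
  by rewrite (linZ (bilin_2 _ actMb)) actM1.
- move=> Hr c a.
  rewrite -[RHS](Hr _ _ _ CA_DH (tm T c a)) /coactCA coactG_tm.
  rewrite (tl_comp (L := nu (tens T C A) (actCA mA rhoA actC) (coactCA DC))); [|exact: Phil|lt].
  done.
Qed.
End Nat.

Lemma K0 (N : lmodType k) (z : tens T C N) : tmap id (epsI epsC) (coactG DC z) = z.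
Proof.
apply: (text (g := fun z => tmap id (epsI epsC) (coactG DC (N:=N) z)) (h := id)); [lt|lt|].
move=> c n; rewrite coactG_tm /tmap (tl_comp (L := tl _)); [|lt|lt].
rewrite -[RHS](counitI_gen (eps := epsC) (D := DC) (c := c) (G := fun c1 => tm T c1 n)) //; [|lt].
apply: tl_congr => c1 c2; rewrite /epsI; tle.
by rewrite /id (linZ (bilin_2 _ (tm_bilin _ _ _))).
Qed.

Section V1.
Variable nu1 : tens T C (tens T C A) -> tens T C A.
Hypothesis H1 : inV1 mA oneA rhoA actC DC epsC nu1.
Local Notation th c d := (epsI epsC (nu1 (tm T c (tm T d oneA)))).

Lemma nu1_lin : lin nu1.
Proof. by case: H1 => [[[]]]. Qed.
Lemma nu1_A x a : nu1 (actCCA mA rhoA actC x a) = actCA mA rhoA actC (nu1 x) a.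
Proof. by case: H1 => [[[_ e] _]] _ _; apply: e. Qed.
Lemma nu1_co x : coactCA DC (nu1 x) = tmap id nu1 (coactCCA DC x).
Proof. by case: H1 => [[_ e]] _ _; apply: e. Qed.
Lemma nu1_i c d a b : nu1 (tm T c (tm T d (mA b a))) = tmap id (mA b) (nu1 (tm T c (tm T d a))).
Proof. by case: H1 => _ e _; apply: e. Qed.
Lemma nu1_ii c d :
  tl (fun d1 d2 => tl (fun h a0 => tm T (actC d2 h) a0)
        (rhoA (epsI epsC (nu1 (tm T c (tm T d1 oneA)))))) (DC d)
  = nu1 (tm T c (tm T d oneA)).
Proof. by case: H1 => _ _ e; apply: e. Qed.

Lemma K2 c d : nu1 (tm T c (tm T d oneA))
  = tl (fun c1 c2 => tm T c1 (epsI epsC (nu1 (tm T c2 (tm T d oneA))))) (DC c).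
Proof.
have nl := nu1_lin.
rewrite -[LHS]K0 -/(coactCA DC _) nu1_co /coactCCA coactG_tm /tmap.
rewrite (tl_comp (L := tl (fun c1 y => tm T (id c1) (nu1 y)))); [|lt|lt].
rewrite (tl_comp (L := tl _)); [|lt|lt].
by apply: tl_congr => c1 c2; tle.
Qed.

Lemma K1 c d a :
  tl (fun h a0 => tl (fun h1 h2 => mA a0 (epsI epsC (nu1 (tm T (actC c h1) (tm T (actC d h2) oneA)))))
        (DH h)) (rhoA a)
  = mA (epsI epsC (nu1 (tm T c (tm T d oneA)))) a.
Proof.
have nl := nu1_lin.
rewrite -epsI_actG //; change (actG rhoA actC mA) with (actCA mA rhoA actC); rewrite -nu1_A /actCCA actG_tm; last by case: actCA_rmod.
transitivity (epsI epsC (nu1 (tl (fun h a0 => tl (fun h1 h2 => tm T (actC c h1) (tm T (actC d h2) a0))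
   (DH h)) (rhoA a)))); last first.
  congr (epsI epsC (nu1 _)).
  rewrite rhoA_co'; [|lt|lt|lt].
  apply: tl_congr => h y; rewrite /actCA actG_tm // (tl_comp (L := tm T (actC c h))); [|lt|lt].
  by apply: tl_congr => h' a'; rewrite mA_1l.
rewrite (tl_comp (L := fun z => epsI epsC (nu1 z))); [|lt|lt].
apply: tl_congr => h a0.
rewrite (tl_comp (L := fun z => epsI epsC (nu1 z))); [|lt|lt].
apply: tl_congr => h1 h2.
rewrite -[X in _ = epsI _ (nu1 (tm _ _ (tm _ _ X)))](mA_1r a0) nu1_i epsI_tmap //; exact: bilin_2.
Qed.

Lemma Psi_morph (M : lmodType k) actM rhoM :
  is_DHmod mA oneA rhoA actC DC epsC actM rhoM ->
  is_morph (actG rhoA actC actM) (coactG DC (N:=M)) actM rhoM (Psi oneA epsC nu1 actM rhoM).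
Proof.
move=> HM; have HM' := HM; case: HM' => [[actMb actMa actM1] rhoMl rhoMco rhoMeps rhoMcomp].
have nl := nu1_lin.
have Pl : lin (Psi oneA epsC nu1 actM rhoM) by rewrite /Psi; lt.
split; [split|].
- exact: Pl.
- move=> x a.
  apply: (text (g := fun x => Psi oneA epsC nu1 actM rhoM (actG rhoA actC actM x a))
               (h := fun x => actM (Psi oneA epsC nu1 actM rhoM x) a)); [lt|lt|].
  move=> c m.
  transitivity (tl (fun e m' => tl (fun h a0 => tl (fun h1 h2 =>
      actM (actM m' a0) (th (actC c h1) (actC e h2))) (DH h)) (rhoA a)) (rhoM m)).
    rewrite actG_tm // /Psi (tl_comp (L := tl _)); [|lt|lt].
    transitivity (tl (fun h a0 => tl (fun e m' => tl (fun h' a' =>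
       actM (actM m' a') (th (actC c h) (actC e h'))) (rhoA a0)) (rhoM m)) (rhoA a)).
      apply: tl_congr => h a0; rewrite tlE; [|lt].
      rewrite rhoMcomp (tl_comp (L := tl _)); [|lt|lt].
      apply: tl_congr => e m'; rewrite (tl_comp (L := tl _)); [|lt|lt].
      by apply: tl_congr => h' a'; tle.
    rewrite tl_swap; [|lt|lt]; apply: tl_congr => e m'.
    by rewrite rhoA_co'; [|lt|lt|lt].
  rewrite /Psi tlE; [|lt]; rewrite (tl_comp (L := fun z => actM z a)); [|lt|lt].
  apply: tl_congr => e m'.
  rewrite actMa -K1 (tl_comp (L := actM m')); [|lt|lt].
  apply: tl_congr => h a0; rewrite (tl_comp (L := actM m')); [|lt|lt].
  by apply: tl_congr => h1 h2; rewrite actMa.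
- move=> x.
  apply: (text (g := fun x => rhoM (Psi oneA epsC nu1 actM rhoM x))
               (h := fun x => tmap id (Psi oneA epsC nu1 actM rhoM) (coactG DC (N:=M) x))); [lt|lt|].
  move=> c m.
  have inner : forall x (m1 : M),
    tl (fun d e => tl (fun h a' => tm T (actC e h) (actM m1 a')) (rhoA (th c d))) (DC x)
    = tl (fun c1 c2 => tm T c1 (actM m1 (th c2 x))) (DC c).
    move=> x0 m1.
    transitivity (tmap id (actM m1) (nu1 (tm T c (tm T x0 oneA)))); last first.
      rewrite K2 /tmap (tl_comp (L := tl _)); [|lt|lt].
      by apply: tl_congr => c1 c2; tle.
    rewrite -nu1_ii /tmap (tl_comp (L := tl _)); [|lt|lt].
    apply: tl_congr => d e; rewrite (tl_comp (L := tl _)); [|lt|lt].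
    by apply: tl_congr => h a'; tle.
  transitivity (tl (fun x m1 => tl (fun c1 c2 => tm T c1 (actM m1 (th c2 x))) (DC c)) (rhoM m)).
    rewrite /Psi tlE; [|lt]; rewrite (tl_comp (L := rhoM)); [|lt|lt].
    transitivity (tl (fun d m0 => tl (fun e m1 => tl (fun h a' => tm T (actC e h) (actM m1 a'))
        (rhoA (th c d))) (rhoM m0)) (rhoM m)).
      by apply: tl_congr => d m0; rewrite rhoMcomp.
    rewrite -(coass_gen (D := DC) (rho := rhoM) (m := m)
      (F := fun d e m1 => tl (fun h a' => tm T (actC e h) (actM m1 a')) (rhoA (th c d))));
      [|lt|lt|exact: rhoMco|lt|lt|lt].
    by apply: tl_congr => x0 m1; rewrite inner.
  rewrite coactG_tm /tmap (tl_comp (L := tl _)); [|lt|lt].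
  rewrite tl_swap; [|lt|lt].
  apply: tl_congr => c1 c2; rewrite tlE; [|lt].
  rewrite /Psi tlE; [|lt]; rewrite (tl_comp (L := tm T (id c1))); [|lt|lt].
  done.
Qed.


Lemma Psi_nat : is_nat mA oneA rhoA actC DC epsC (Psi oneA epsC nu1).
Proof.
have nl := nu1_lin.
split.
  by move=> M actM rhoM HM; apply: Psi_morph.
move=> M actM rhoM N actN rhoN f HM HN [[fl fA] fco] x.
case: HM => [[actMb actMa actM1] rhoMl rhoMco rhoMeps rhoMcomp].
case: HN => [[actNb actNa actN1] rhoNl rhoNco rhoNeps rhoNcomp].
apply: (text (g := fun x => f (Psi oneA epsC nu1 actM rhoM x))
             (h := fun x => Psi oneA epsC nu1 actN rhoN (tmap id f x))); [rewrite /Psi; lt|rewrite /Psi; lt|].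
move=> c m; rewrite /Psi /tmap; tle.
rewrite fco /tmap (tl_comp (L := f)); [|lt|lt].
rewrite (tl_comp (L := tl _)); [|lt|lt].
by apply: tl_congr => d m0; tle; rewrite fA.
Qed.

Lemma Phi_Psi x : Phi mA rhoA actC DC (Psi oneA epsC nu1) x = nu1 x.
Proof.
have nl := nu1_lin.
apply: (text (g := Phi mA rhoA actC DC (Psi oneA epsC nu1)) (h := nu1));
  [rewrite /Phi /Psi; lt | exact: nl |].
move=> c z.
apply: (text (g := fun z => Phi mA rhoA actC DC (Psi oneA epsC nu1) (tm T c z))
             (h := fun z => nu1 (tm T c z))); [rewrite /Phi /Psi; lt | lt |].
move=> d a.
rewrite -[X in _ = nu1 (tm _ _ (tm _ _ X))](mA_1r a) nu1_i -nu1_ii.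
rewrite /Phi /Psi tlE; [|lt]; rewrite /coactCA coactG_tm (tl_comp (L := tl _)); [|lt|lt].
rewrite /tmap (tl_comp (L := tl _)); [|lt|lt].
apply: tl_congr => d1 d2; rewrite tlE; [|lt].
rewrite /actCA actG_tm // (tl_comp (L := tl _)); [|lt|lt].
by apply: tl_congr => h a0; tle.
Qed.
End V1.

Lemma tmap_idf (X N : lmodType k) (y : tens T X N) : tmap id (fun x => x) y = y.
Proof.
apply: (text (g := tmap id (fun x => x)) (h := id)); [lt|lt|].
by move=> u v; rewrite /tmap; tle.
Qed.

Lemma tmap_comp (X N1 N2 N3 : lmodType k) (f : N1 -> N2) (g : N2 -> N3) (y : tens T X N1) :
  lin f -> lin g -> tmap id (fun x => g (f x)) y = tmap id g (tmap id f y).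
Proof.
move=> fl gl.
apply: (text (g := tmap id (fun x => g (f x))) (h := fun y => tmap id g (tmap id f y))); [lt|lt|].
by move=> u v; rewrite /tmap; tle.
Qed.

Lemma id_morph (M : lmodType k) (actM : M -> A -> M) (rhoM : M -> tens T C M) :
  is_morph actM rhoM actM rhoM (fun x => x).
Proof. by split; [split|move=> m; rewrite tmap_idf]. Qed.

Lemma morph_comp (M1 M2 M3 : lmodType k) (act1 : M1 -> A -> M1) (rho1 : M1 -> tens T C M1) (act2 : M2 -> A -> M2) (rho2 : M2 -> tens T C M2) (act3 : M3 -> A -> M3) (rho3 : M3 -> tens T C M3)
  (f : M1 -> M2) (g : M2 -> M3) :
  is_morph act1 rho1 act2 rho2 f -> is_morph act2 rho2 act3 rho3 g ->
  is_morph act1 rho1 act3 rho3 (fun x => g (f x)).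
Proof.
move=> [[fl fA] fc] [[gl gA] gc]; split; [split|].
- exact: lin_comp.
- by move=> m a; rewrite fA gA.
- by move=> m; rewrite gc fc; symmetry; apply: tmap_comp.
Qed.

Lemma sep_of_V1 : (exists nu1, inV1 mA oneA rhoA actC DC epsC nu1 /\ normalized DC nu1) ->
  F_separable mA oneA rhoA actC DC epsC.
Proof.
move=> [nu1 [H1 Hn]].
have Hnat := Psi_nat H1.
have Hnorm : normalized DC (Phi mA rhoA actC DC (Psi oneA epsC nu1)).
  move=> c a; rewrite -[RHS](Hn c a); apply: tl_congr => c1 c2; exact: Phi_Psi.
have Hr := proj1 (normalized_iff Hnat) Hnorm.
exists (fun M N actM rhoM actN rhoN f m => Psi oneA epsC nu1 actN rhoN (tmap id f (rhoM m))).
move=> M N actM rhoM actN rhoN HM HN; split.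
- move=> f Hf.
  have HM' := HM; case: HM' => [[actMb _ _] _ _ _ _].
  have HN' := HN; case: HN' => [[actNb _ _] _ _ _ _].
  apply: (morph_comp (f := rhoM) (g := fun y => Psi oneA epsC nu1 actN rhoN (tmap id f y)) (rho_morph HM)).
  apply: (morph_comp (f := tmap id f) (g := Psi oneA epsC nu1 actN rhoN) (tmap_morph actMb actNb Hf)).
  exact: Psi_morph.
- move=> f [_ fc] m.
  by rewrite -fc Hr.
- move=> M' actM' rhoM' N' actN' rhoN' g h f HM' HN' [[gl gA] gc] Hh [fl fA] m.
  have hl : lin h by case: Hh => [[]].
  rewrite (tmap_comp (f := fun x => f (g x)) (g := h)); [|lt|done].
  rewrite (tmap_comp (f := g) (g := f)) //.
  rewrite -gc.
  by case: Hnat => _ Hn2; rewrite (Hn2 _ _ _ _ _ _ _ HN HN' Hh).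
Qed.

Lemma V1_of_sep : F_separable mA oneA rhoA actC DC epsC ->
  exists nu1, inV1 mA oneA rhoA actC DC epsC nu1 /\ normalized DC nu1.
Proof.
move=> [P HP].
pose nu : natfam T A C := fun M actM rhoM =>
  P (tens T C M) M (actG rhoA actC actM) (coactG DC (N:=M)) actM rhoM (epsI epsC).
have epsAm : forall (M : lmodType k) actM, bilin actM ->
    is_Amorph (actG rhoA actC actM) actM (epsI epsC (Y:=M)).
  move=> M actM actMb; split; [lt | move=> m a; exact: epsI_actG].
have Hnat : is_nat mA oneA rhoA actC DC epsC nu.
  split.
    move=> M actM rhoM HM; have HM' := HM; case: HM' => [[actMb actMa actM1] _ _ _ _].
    have [Ha _ _] := HP _ _ _ _ _ _ (G_DH actMb actMa actM1) HM.
    exact: (Ha _ (epsAm _ _ actMb)).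
  move=> M actM rhoM N actN rhoN f HM HN Hf x.
  have HM' := HM; case: HM' => [[actMb actMa actM1] _ _ _ _].
  have HN' := HN; case: HN' => [[actNb actNa actN1] _ _ _ _].
  have GM := G_DH actMb actMa actM1.
  have GN := G_DH actNb actNa actN1.
  have [_ _ Hc1] := HP _ _ _ _ _ _ GM HM.
  have [_ _ Hc2] := HP _ _ _ _ _ _ GN HN.
  have e1 := Hc1 _ _ _ _ _ _ (fun x => x) f (epsI epsC) GM HN (id_morph _ _) Hf (epsAm _ _ actMb) x.
  have e2 := Hc2 _ _ _ _ _ _ (tmap id f) (fun x => x) (epsI epsC) GM HN
    (tmap_morph actMb actNb Hf.1) (id_morph _ _) (epsAm _ _ actNb) x.
  rewrite /nu -e1 -e2.
  congr (P _ _ _ _ _ _ _ x).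
  apply: functional_extensionality => y.
  case: Hf => [[fl _] _].
  by rewrite epsI_tmap.
exists (Phi mA rhoA actC DC nu); split.
  exact: Phi_inV1.
apply: (proj2 (normalized_iff Hnat)) => M actM rhoM HM m.
have HM' := HM; case: HM' => [[actMb actMa actM1] rhoMl _ rhoMeps _].
have GM := G_DH actMb actMa actM1.
have [_ _ Hc] := HP _ _ _ _ _ _ GM HM.
have e := Hc _ _ _ _ _ _ rhoM (fun x => x) (epsI epsC) HM HM (rho_morph HM) (id_morph _ _) (epsAm _ _ actMb) m.
rewrite /nu -e.
have -> : (fun x => epsI epsC (rhoM x)) = (fun x => x).
  by apply: functional_extensionality => y; rewrite rhoMeps.
have [_ Hb _] := HP _ _ _ _ _ _ HM HM.
exact: (Hb _ (id_morph _ _)).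
Qed.
Lemma main_sec :
  (forall nu, is_nat mA oneA rhoA actC DC epsC nu ->
      inV1 mA oneA rhoA actC DC epsC (Phi mA rhoA actC DC nu))
  /\ (forall (nu nu' : natfam T A C) (a : k) x,
        Phi mA rhoA actC DC
            (fun M actM rhoM y => a *: nu M actM rhoM y + nu' M actM rhoM y) x
        = a *: Phi mA rhoA actC DC nu x + Phi mA rhoA actC DC nu' x)
  /\ (forall nu1, inV1 mA oneA rhoA actC DC epsC nu1 ->
        is_nat mA oneA rhoA actC DC epsC (Psi oneA epsC nu1))
  /\ (forall nu1, inV1 mA oneA rhoA actC DC epsC nu1 ->
        forall x, Phi mA rhoA actC DC (Psi oneA epsC nu1) x = nu1 x)
  /\ (forall nu, is_nat mA oneA rhoA actC DC epsC nu ->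
        forall (M : lmodType k) actM rhoM,
        is_DHmod mA oneA rhoA actC DC epsC actM rhoM ->
        forall x, Psi oneA epsC (Phi mA rhoA actC DC nu) actM rhoM x
                  = nu M actM rhoM x)
  /\ (forall nu, is_nat mA oneA rhoA actC DC epsC nu ->
        (normalized DC (Phi mA rhoA actC DC nu) <->
         forall (M : lmodType k) actM rhoM,
           is_DHmod mA oneA rhoA actC DC epsC actM rhoM ->
           forall m, nu M actM rhoM (rhoM m) = m))
  /\ (F_separable mA oneA rhoA actC DC epsC <->
      exists nu1, inV1 mA oneA rhoA actC DC epsC nu1 /\ normalized DC nu1).
Proof.
split; first by move=> nu Hn; exact: Phi_inV1.
split; first by [].
split; first by move=> nu1 H1; exact: Psi_nat.
split; first by move=> nu1 H1 x; exact: Phi_Psi.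
split; first by move=> nu Hn M actM rhoM HM x; exact: Psi_Phi.
split; first by move=> nu Hn; exact: normalized_iff.
by split; [exact: V1_of_sep | exact: sep_of_V1].
Qed.
End DH.

Unset Implicit Arguments.
Theorem theorem2p1p3 (k : comPzRingType) (T : tensor_provider k)
  (H A C : lmodType k)
  (mH : H -> H -> H) (oneH : H) (DH : H -> tens T H H) (epsH : H -> k)
  (mA : A -> A -> A) (oneA : A) (rhoA : A -> tens T H A)
  (actC : C -> H -> C) (DC : C -> tens T C C) (epsC : C -> k) :
  DH_datum mH oneH DH epsH mA oneA rhoA actC DC epsC ->
  is_hopf mH oneH DH epsH ->
  (* nu |-> nu_{C(x)A} maps V into V_1 and is k-linear *)
  (forall nu, is_nat mA oneA rhoA actC DC epsC nu ->
      inV1 mA oneA rhoA actC DC epsC (Phi mA rhoA actC DC nu))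
  /\ (forall (nu nu' : natfam T A C) (a : k) x,
        Phi mA rhoA actC DC
            (fun M actM rhoM y => a *: nu M actM rhoM y + nu' M actM rhoM y) x
        = a *: Phi mA rhoA actC DC nu x + Phi mA rhoA actC DC nu' x)
  (* the inverse map sends V_1 into V *)
  /\ (forall nu1, inV1 mA oneA rhoA actC DC epsC nu1 ->
        is_nat mA oneA rhoA actC DC epsC (Psi oneA epsC nu1))
  (* the two maps are mutually inverse *)
  /\ (forall nu1, inV1 mA oneA rhoA actC DC epsC nu1 ->
        forall x, Phi mA rhoA actC DC (Psi oneA epsC nu1) x = nu1 x)
  /\ (forall nu, is_nat mA oneA rhoA actC DC epsC nu ->
        forall (M : lmodType k) actM rhoM,
        is_DHmod mA oneA rhoA actC DC epsC actM rhoM ->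
        forall x, Psi oneA epsC (Phi mA rhoA actC DC nu) actM rhoM x
                  = nu M actM rhoM x)
  (* normalized elements correspond to nu with nu_M o rho_M = I_M *)
  /\ (forall nu, is_nat mA oneA rhoA actC DC epsC nu ->
        (normalized DC (Phi mA rhoA actC DC nu) <->
         forall (M : lmodType k) actM rhoM,
           is_DHmod mA oneA rhoA actC DC epsC actM rhoM ->
           forall m, nu M actM rhoM (rhoM m) = m))
  (* separability criterion for the forgetful functor *)
  /\ (F_separable mA oneA rhoA actC DC epsC <->
      exists nu1, inV1 mA oneA rhoA actC DC epsC nu1 /\ normalized DC nu1).
Proof.
move=> [[[mHb _ _ _] [DHl epsHl _ _ _] _ _ _]
        [[mAb mAa mA1l mA1r] rhoAl rhoAco rhoAeps [rhoAmul rhoAone]]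
        [[DCl epsCl DCco DCepsI DCIeps] actCb [actCa actC1] DCact epsCact] _] _.
apply: (main_sec (mH := mH) (oneH := oneH) (DH := DH) (epsH := epsH)); assumption.
Qed.
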